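(* The minimum set of measurements that must be protected (i.e. made immune to manipulation, so that an attack must satisfy $a_i=0$ for every protected measurement $i$) to guarantee that no nonzero stealthy attack $a=Hc$ can be carried out is obtained by protecting all measurements in $\mathcal{M}^C$: protecting $\mathcal{M}^C$ ensures that no nonzero $a=Hc$ vanishes on $\mathcal{M}^C$, and no set of fewer than $|\mathcal{M}^C|$ protected measurements achieves this guarantee.
   Context: Power network: a connected graph $\mathcal{G}=(\mathcal{N},\mathcal{L})$ with $N$ buses and lines. Linearized (DC) state estimation: measurement set $\mathcal{M}$ of real-power measurements, each a line-flow measurement on a line or an injection measurement at a bus; state $x\in\mathbb{R}^{N-1}$ of bus phase angles (reference fixed); $z=Hx+e$ with Jacobian $H$ whose rows are indexed by $\mathcal{M}$, of full column rank $N-1$. A data injection attack replaces $z$ by $z+a$; it is stealthy if $a=Hc$ for some $c$. Measurement assignment: an injective map $f$ from a set of measurements to lines such that a flow measurement on line $l$ can only be assigned to $l$, and an injection measurement at bus $\eta$ can only be assigned to an unmeasured line (carrying no flow measurement) incident to $\eta$. The system is observable iff some measurement assignment has image forming a spanning tree of $\mathcal{G}$. Fix such an assignment $f$, and let $\mathcal{M}^C$ be the set of measurements assigned by $f$ (so $|\mathcal{M}^C|=N-1$).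
   Formalization: The equivalence between observability of a measurement set and the existence of a measurement assignment whose image forms a spanning tree is a hypothesis, assumed for every measurement set on the network with its given line susceptances. The paper assumes this as well. *)

(* Defs.v *)
From mathcomp Require Import all_boot all_order all_algebra.
Set Implicit Arguments. Unset Strict Implicit. Unset Printing Implicit Defensive.
Import Order.TTheory GRing.Theory Num.Theory.
Local Open Scope ring_scope.

(* Network: buses T (a finType, N = #|T|), lines Ln (a finType), each line l
   joins the buses (ends l).1 and (ends l).2 and has susceptance b l.
   Measurements: a measurement is an element of (Ln + T):
     inl l   = real-power flow measurement on line l (oriented .1 -> .2),
     inr eta = real-power injection measurement at bus eta.
   A state is a vector of bus angles c : T -> R with c r = 0 for the
   reference bus r (this is x in R^(N-1)). *)
Notation meas Ln T := (Ln + T)%type.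

Definition flow_val (R : nzRingType) (T Ln : finType) (ends : Ln -> T * T)
  (b : Ln -> R) (l : Ln) (c : T -> R) : R :=
  b l * (c (ends l).1 - c (ends l).2).

(* (H c)_m : the row of the DC Jacobian indexed by measurement m applied to c *)
Definition meas_val (R : nzRingType) (T Ln : finType) (ends : Ln -> T * T)
  (b : Ln -> R) (m : meas Ln T) (c : T -> R) : R :=
  match m with
  | inl l => flow_val ends b l c
  | inr eta => \sum_(l | (ends l).1 == eta) flow_val ends b l c
               - \sum_(l | (ends l).2 == eta) flow_val ends b l c
  end.

(* H restricted to the rows M' has full column rank (observability of M'). *)
Definition observable (R : nzRingType) (T Ln : finType) (ends : Ln -> T * T)
  (b : Ln -> R) (r : T) (M' : {set meas Ln T}) : Prop :=
  forall c : T -> R, c r = 0 ->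
    (forall m, m \in M' -> meas_val ends b m c = 0) -> forall i, c i = 0.

Definition line_adj (T Ln : finType) (ends : Ln -> T * T) (E : {set Ln}) : rel T :=
  fun x y => [exists l in E, (ends l == (x, y)) || (ends l == (y, x))].

Definition connected_lines (T Ln : finType) (ends : Ln -> T * T) (E : {set Ln}) :=
  forall x y : T, connect (line_adj ends E) x y.

Definition acyclic_lines (T Ln : finType) (ends : Ln -> T * T) (E : {set Ln}) :=
  forall l, l \in E -> ~~ connect (line_adj ends (E :\ l)) (ends l).1 (ends l).2.

Definition spanning_tree (T Ln : finType) (ends : Ln -> T * T) (E : {set Ln}) :=
  connected_lines ends E /\ acyclic_lines ends E.

Definition is_assignment (T Ln : finType) (ends : Ln -> T * T)
  (M D : {set meas Ln T}) (f : meas Ln T -> Ln) : Prop :=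
  [/\ D \subset M,
      {in D &, injective f},
      (forall l, inl l \in D -> f (inl l) = l) &
      (forall eta, inr eta \in D ->
         (((ends (f (inr eta))).1 == eta) || ((ends (f (inr eta))).2 == eta))
         /\ inl (f (inr eta)) \notin M)].

(* Main.v *)
Require Import Defs.
From mathcomp Require Import all_boot all_order all_algebra.
Set Implicit Arguments. Unset Strict Implicit. Unset Printing Implicit Defensive.
Import Order.TTheory GRing.Theory Num.Theory.
Local Open Scope ring_scope.

Section Aux.
Variable R : fieldType.

Lemma indep_le s n (F : 'I_s -> 'rV[R]_n) :
  (forall i, exists v : 'cV_n, (F i *m v) 0 0 != 0 /\
     forall j, j != i -> (F j *m v) 0 0 = 0) -> (s <= n)%N.
Proof.
move=> H; have [v Hv] := fin_all_exists H.
pose B : 'M[R]_(s, n) := \matrix_(i, j) F i 0 j.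
pose B' : 'M[R]_(n, s) := \matrix_(j, i) (v i j 0 / (F i *m v i) 0 0).
have BB : B *m B' = 1%:M.
  apply/matrixP => i i'; rewrite !mxE.
  under eq_bigr => j _ do rewrite !mxE mulrA.
  rewrite -mulr_suml.
  have E : forall a b, \sum_j F a 0 j * v b j 0 = (F a *m v b) 0 0.
    by move=> a b; rewrite !mxE.
  rewrite !E.
  case: (Hv i') => nz oth.
  case: eqP => [->|/eqP ne]; first by rewrite divff.
  by rewrite oth ?mul0r.
have /eqP <- : row_free B by apply/row_freeP; exists B'.
exact: rank_leq_col.
Qed.

Lemma kernel_ex s n (A : 'M[R]_(s, n)) : (s < n)%N ->
  exists v : 'cV_n, v != 0 /\ A *m v = 0.
Proof.
move=> lt.
have rk : (0 < \rank (kermx A^T))%N.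
  rewrite mxrank_ker mxrank_tr subn_gt0.
  exact: leq_ltn_trans (rank_leq_row A) lt.
have [i Hi] : exists i, row i (kermx A^T) != 0.
  apply/existsP; apply: contraTT rk; rewrite negb_exists => /forallP Hall.
  have -> : kermx A^T = 0.
    apply/row_matrixP => i; rewrite row0; exact/eqP/negPn/Hall.
  by rewrite mxrank0.
exists (row i (kermx A^T))^T; split; first by rewrite trmx_eq0.
by apply/trmx_inj; rewrite trmx_mul trmxK trmx0 -row_mul mulmx_ker row0.
Qed.
End Aux.
Section MV.
Variables (R : fieldType) (T Ln : finType) (ends : Ln -> T * T) (b : Ln -> R).

Lemma meas_val_ext m (c1 c2 : T -> R) : c1 =1 c2 ->
  meas_val ends b m c1 = meas_val ends b m c2.
Proof.
move=> E; case: m => [l|eta] /=; first by rewrite /flow_val !E.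
by congr (_ - _); apply: eq_bigr => l _; rewrite /flow_val !E.
Qed.

Lemma meas_val_lin m (a : T -> R) (g : T -> T -> R) :
  meas_val ends b m (fun y => \sum_x a x * g x y) =
  \sum_x a x * meas_val ends b m (g x).
Proof.
have fl : forall l, flow_val ends b l (fun y => \sum_x a x * g x y) =
   \sum_x a x * flow_val ends b l (g x).
  move=> l; rewrite /flow_val -sumrB mulr_sumr; apply: eq_bigr => x _.
  by rewrite -mulrBr mulrCA.
case: m => [l|eta] /=; first exact: fl.
under eq_bigr => l _ do rewrite fl.
under [X in _ - X]eq_bigr => l _ do rewrite fl.
rewrite (exchange_big _ _ _ _ _ (fun l x => a x * flow_val ends b l (g x))).
rewrite [X in _ - X](exchange_big _ _ _ _ _ (fun l x => a x * flow_val ends b l (g x))).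
rewrite -sumrB; apply: eq_bigr => x _.
by rewrite -!mulr_sumr -mulrBr.
Qed.

Definition delta (x : T) : T -> R := fun y => (x == y)%:R.

Lemma sum_delta (c : T -> R) y : \sum_x c x * delta x y = c y.
Proof.
rewrite (bigD1 y) //= /delta eqxx mulr1 big1 ?addr0 // => x /negbTE.
by rewrite eq_sym => ->; rewrite mulr0.
Qed.

Lemma meas_valE m (c : T -> R) :
  meas_val ends b m c = \sum_x c x * meas_val ends b m (delta x).
Proof.
rewrite -meas_val_lin; apply: meas_val_ext => y; by rewrite sum_delta.
Qed.

Definition vec (c : T -> R) : 'cV[R]_#|T| := \col_j c (enum_val j).
Definition rowm m : 'rV[R]_#|T| := \row_j meas_val ends b m (delta (enum_val j)).
Definition erow (r : T) : 'rV[R]_#|T| := \row_j (enum_val j == r)%:R.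

Lemma rowmE m c : (rowm m *m vec c) 0 0 = meas_val ends b m c.
Proof.
rewrite meas_valE !mxE (big_enum_val (A := T)); apply: eq_bigr => j _.
by rewrite !mxE mulrC.
Qed.

Lemma erowE r c : (erow r *m vec c) 0 0 = c r.
Proof.
rewrite !mxE -[RHS](sum_delta c r) (big_enum_val (A := T)); apply: eq_bigr => j _.
by rewrite !mxE mulrC /delta.
Qed.
End MV.

Theorem theorem6 (R : realFieldType) (T Ln : finType) (ends : Ln -> T * T)
  (b : Ln -> R) (r : T) (M MC : {set meas Ln T}) (f : meas Ln T -> Ln) :
  (forall l, (ends l).1 != (ends l).2) ->
  (forall l, b l != 0) ->
  connected_lines ends [set: Ln] ->
  observable ends b r M ->
  (* standing fact of the context: observability <-> existence of a
     measurement assignment whose image is a spanning tree *)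
  (forall M' : {set meas Ln T}, observable ends b r M' <->
     exists (D : {set meas Ln T}) (g : meas Ln T -> Ln),
       is_assignment ends M' D g /\ spanning_tree ends (g @: D)) ->
  is_assignment ends M MC f ->
  spanning_tree ends (f @: MC) ->
  (forall c : T -> R, c r = 0 ->
     (forall m, m \in MC -> meas_val ends b m c = 0) ->
     forall m, m \in M -> meas_val ends b m c = 0)
  /\
  (forall S : {set meas Ln T}, S \subset M -> (#|S| < #|MC|)%N ->
     exists c : T -> R, [/\ c r = 0,
       (forall m, m \in S -> meas_val ends b m c = 0) &
       exists2 m, m \in M & meas_val ends b m c != 0]).
Proof.
move=> nloop bnz _ obsM Hiff Hass Htree.
have Hass' := Hass; case: Hass' => sub injf inlf inrf.
split.
  move=> c cr H0 m mM.
  have obsMC : observable ends b r MC.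
    apply/Hiff; exists MC, f; split => //; split => //.
    move=> eta etaM; have [h1 h2] := inrf eta etaM; split => //.
    by apply: contra h2 => H; exact: (subsetP sub).
  have c0 := obsMC c cr H0.
  by rewrite meas_valE big1 // => x _; rewrite c0 mul0r.
have cardMC : (#|MC|.+1 <= #|T|)%N.
  rewrite -(card_in_imset injf).
  set E := f @: MC.
  have acyc : acyclic_lines ends E by case: Htree.
  have HH := (@indep_le R _ _ (fun i : 'I_#|E|.+1 =>
      if unlift ord0 i is Some j then rowm ends b (inl (enum_val j)) else erow R r)).
  apply: HH.
  move=> i /=; case: (unliftP ord0 i) => [i' ->|->].
    set l := enum_val i'.
    have lE : l \in E := enum_valP i'.
    pose K := fun x => connect (line_adj ends (E :\ l)) (ends l).1 x.
    have K1 : K (ends l).1 = true := connect0 _ _.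
    have K2 : K (ends l).2 = false by apply/negbTE; exact: acyc l lE.
    exists (vec (fun x => if K x == K r then (0:R) else 1)); split.
      rewrite rowmE /= /flow_val mulf_neq0 // K1 K2.
      by case: (K r); rewrite /= ?subr0 ?sub0r ?oppr_eq0 oner_eq0.
    move=> j; case: (unliftP ord0 j) => [j' ->|->] ne.
      rewrite rowmE /= /flow_val.
      set l' := enum_val j'.
      have l'in : l' \in E :\ l.
        rewrite in_setD1 enum_valP andbT.
        apply: contra ne => /eqP /enum_val_inj ->; exact: eqxx.
      have adj : line_adj ends (E :\ l) (ends l').1 (ends l').2.
        by apply/existsP; exists l'; rewrite l'in /= -surjective_pairing eqxx.
      have adj' : line_adj ends (E :\ l) (ends l').2 (ends l').1.
        by apply/existsP; exists l'; rewrite l'in /= -surjective_pairing eqxx orbT.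
      have KK : K (ends l').1 = K (ends l').2.
        apply/idP/idP => H; [exact: connect_trans H (connect1 adj)
                            | exact: connect_trans H (connect1 adj')].
      by rewrite KK subrr mulr0.
    by rewrite erowE eqxx.
  exists (vec (fun _ => (1:R))); rewrite erowE; split.
    exact: oner_neq0.
  move=> j; case: (unliftP ord0 j) => [j' ->|->]; last by rewrite eqxx.
  by move=> _; rewrite rowmE /= /flow_val subrr mulr0.
move=> S SM ltS.
have lt : (#|S|.+1 < #|T|)%N by apply: leq_trans cardMC; rewrite ltnS.
pose C : 'M[R]_(#|S|.+1, #|T|) := \matrix_(i, j)
   (if unlift ord0 i is Some k then rowm ends b (enum_val k) else erow R r) 0 j.
have [v [vnz Cv]] := kernel_ex C lt.
pose c := fun x => v (enum_rank x) 0.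
have vc : vec c = v by apply/matrixP => j k; rewrite !mxE /c enum_valK (ord1 k).
have rowC : forall i, (C *m v) i 0 =
  ((if unlift ord0 i is Some k then rowm ends b (enum_val k) else erow R r) *m v) 0 0.
  by move=> i; rewrite !mxE; apply: eq_bigr => j _; rewrite !mxE.
exists c; split.
- by have := rowC ord0; rewrite unlift_none Cv -vc erowE mxE => <-.
- move=> m mS.
  have := rowC (lift ord0 (enum_rank_in mS m)).
  by rewrite liftK enum_rankK_in // Cv -vc rowmE mxE => <-.
- case: (boolP [exists m in M, meas_val ends b m c != 0]) => [/exists_inP [m mM nz]|none].
    by exists m.
  exfalso.
  have all0 : forall m, m \in M -> meas_val ends b m c = 0.
    move=> m mM; apply/eqP; case: eqP => // /eqP nz; move/negP: none; case.
    by apply/exists_inP; exists m.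
  have cr : c r = 0 by have := rowC ord0; rewrite unlift_none Cv -vc erowE mxE => <-.
  have c0 := obsM c cr all0.
  move/negP: vnz; apply; rewrite -vc; apply/eqP/matrixP => j k.
  by rewrite !mxE c0.
Qed.
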